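(* Let $k$ be a field, let $n,m\ge1$, and let $\{p_{ij}\}_{1\le i,j\le n}$ and $\{p'_{ij}\}_{1\le i,j\le m}$ be families of nonzero scalars with $p_{ii}=1$, $p_{ji}=p_{ij}^{-1}$ (and likewise for $p'$), and suppose $p_{ij}\neq1$ for all $i\neq j$ (for the family $p$). Let $A=k_{p_{ij}}[x_1,\dots,x_n]/M$ where $M$ is a graded ideal of $k_{p_{ij}}[x_1,\dots,x_n]$ contained in $k_{p_{ij}}[x_1,\dots,x_n]_{\ge3}$, and let $B=k_{p'_{ij}}[x_1,\dots,x_m]/N$ where $N$ is a graded ideal of $k_{p'_{ij}}[x_1,\dots,x_m]$ contained in $k_{p'_{ij}}[x_1,\dots,x_m]_{\ge2}$. If $A\cong B$ as ungraded algebras, then $n=m$, there is a permutation $\sigma\in S_n$ with $p'_{ij}=p_{\sigma(i)\sigma(j)}$ for all $i,j$, and there are scalars $c_1,\dots,c_n\in k^\times$ such that $x_i\mapsto c_i x_{\sigma(i)}$ defines a graded algebra isomorphism $B\to A$ (i.e. after an elementary change of generators of $A$, $A=B$).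
   Context: The skew polynomial ring $k_{p_{ij}}[x_1,\dots,x_n]$ is the $k$-algebra generated by $x_1,\dots,x_n$ subject to the relations $x_jx_i=p_{ij}x_ix_j$ for all $i,j$; it is graded with each $x_i$ of degree $1$, and $R_{\ge d}$ denotes the span of homogeneous elements of degree $\ge d$. An elementary change of generators replaces the ordered set $\{x_1,\dots,x_n\}$ by $\{a_1x_{\sigma(1)},\dots,a_nx_{\sigma(n)}\}$ with $a_i\in k^\times$ and $\sigma\in S_n$. *)

(* Defs.v *)
(* No multivariate / skew polynomial library is installed, so the
   skew polynomial ring k_p[x_1..x_n] is built here concretely: an element is its
   coefficient function on monomials x^a = x_1^{a_1} ... x_n^{a_n} (a : 'I_n -> nat),
   required to have finite support (sfin).  Multiplication is the twisted convolution
   x^a x^b = twist p a b x^{a+b}, which is exactly what the relations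
   x_j x_i = p_ij x_i x_j give on the ordered monomial basis. *)
From HB Require Import structures.
From mathcomp Require Import all_boot all_order all_algebra.
Set Implicit Arguments. Unset Strict Implicit. Unset Printing Implicit Defensive.
Import Order.TTheory GRing.Theory Num.Theory.
Local Open Scope ring_scope.

Definition mon (n : nat) := {ffun 'I_n -> nat}.
Definition mdeg n (a : mon n) : nat := (\sum_(i < n) a i)%N.
Definition msub n (a b : mon n) : mon n := [ffun i => (a i - b i)%N].
Definition mle n (a b : mon n) : bool := [forall i, (a i <= b i)%N].
Definition mof n N (e : {ffun 'I_n -> 'I_N}) : mon n := [ffun i => nat_of_ord (e i)].

Definition spoly (k : fieldType) (n : nat) := mon n -> k.
Definition sfin (k : fieldType) n (f : spoly k n) : Prop :=
  exists d : nat, forall a, (d < mdeg a)%N -> f a = 0.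

Definition szero (k : fieldType) n : spoly k n := fun _ => 0.
Definition smon (k : fieldType) n (a : mon n) : spoly k n :=
  fun b => if b == a then 1 else 0.
Definition sone (k : fieldType) n : spoly k n := smon k [ffun=> 0%N].
Definition sX (k : fieldType) n (i : 'I_n) : spoly k n :=
  smon k [ffun j => nat_of_bool (j == i)].
Definition sadd (k : fieldType) n (f g : spoly k n) : spoly k n := fun a => f a + g a.
Definition ssub (k : fieldType) n (f g : spoly k n) : spoly k n := fun a => f a - g a.
Definition sscale (k : fieldType) n (c : k) (f : spoly k n) : spoly k n :=
  fun a => c * f a.

(* x^a x^b = twist p a b * x^(a+b) in k_p[x_1..x_n] *)
Definition twist (k : fieldType) n (p : 'I_n -> 'I_n -> k) (a b : mon n) : k :=
  \prod_(i < n) \prod_(j < n | (j < i)%N) p j i ^+ (a i * b j).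

Definition smul (k : fieldType) n (p : 'I_n -> 'I_n -> k) (f g : spoly k n)
  : spoly k n := fun c =>
  \sum_(e : {ffun 'I_n -> 'I_(mdeg c).+1} | mle (mof e) c)
     twist p (mof e) (msub c (mof e)) * f (mof e) * g (msub c (mof e)).

Definition shomog (k : fieldType) n (d : nat) (f : spoly k n) : Prop :=
  forall a, mdeg a != d -> f a = 0.
Definition scomp (k : fieldType) n (d : nat) (f : spoly k n) : spoly k n :=
  fun a => if mdeg a == d then f a else 0.

Definition skew_params (k : fieldType) n (p : 'I_n -> 'I_n -> k) : Prop :=
  [/\ forall i j, p i j != 0, forall i, p i i = 1 & forall i j, p j i = (p i j)^-1].

Record graded_ideal (k : fieldType) n (p : 'I_n -> 'I_n -> k)
    (M : spoly k n -> Prop) : Prop := GradedIdeal {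
  gi_fin : forall f, M f -> sfin f;
  gi_zero : M (@szero k n);
  gi_add : forall f g, M f -> M g -> M (sadd f g);
  gi_scale : forall c f, M f -> M (sscale c f);
  gi_mull : forall f g, sfin g -> M f -> M (smul p g f);
  gi_mulr : forall f g, sfin g -> M f -> M (smul p f g);
  gi_graded : forall d f, M f -> M (scomp d f) }.

Definition ideal_in_ge (k : fieldType) n (d : nat) (M : spoly k n -> Prop) : Prop :=
  forall f, M f -> forall a, (mdeg a < d)%N -> f a = 0.

(* F : k_p[x]/M -> k_p'[x]/N is a bijective (ungraded) k-algebra homomorphism,
   given on representatives: F maps representatives to representatives and all
   identities hold modulo N (resp. M). *)
Record alg_iso_quot (k : fieldType) n m (p : 'I_n -> 'I_n -> k)
    (p' : 'I_m -> 'I_m -> k) (M : spoly k n -> Prop) (N : spoly k m -> Prop)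
    (F : spoly k n -> spoly k m) : Prop := AlgIsoQuot {
  ai_fin : forall f, sfin f -> sfin (F f);
  ai_wd : forall f g, sfin f -> sfin g -> M (ssub f g) -> N (ssub (F f) (F g));
  ai_add : forall f g, sfin f -> sfin g ->
    N (ssub (F (sadd f g)) (sadd (F f) (F g)));
  ai_scale : forall c f, sfin f -> N (ssub (F (sscale c f)) (sscale c (F f)));
  ai_mul : forall f g, sfin f -> sfin g ->
    N (ssub (F (smul p f g)) (smul p' (F f) (F g)));
  ai_one : N (ssub (F (@sone k n)) (@sone k m));
  ai_inj : forall f g, sfin f -> sfin g -> N (ssub (F f) (F g)) -> M (ssub f g);
  ai_surj : forall h, sfin h -> exists2 f, sfin f & N (ssub (F f) h) }.

Definition graded_map (k : fieldType) n m (N : spoly k m -> Prop)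
    (F : spoly k n -> spoly k m) : Prop :=
  forall d f, sfin f -> shomog d f ->
    exists2 g, sfin g /\ shomog d g & N (ssub (F f) g).

(* Main.v *)
Require Import Defs.
From HB Require Import structures.
From mathcomp Require Import all_boot all_order all_algebra.
From Stdlib Require Import ClassicalEpsilon FunctionalExtensionality.
From mathcomp Require Import ring zify.
Import GRing.Theory.
Local Open Scope ring_scope.

Module Helpers.
Set Implicit Arguments. Unset Strict Implicit. Unset Printing Implicit Defensive.

Section Mon.
Variable n : nat.
Definition m0 : mon n := [ffun=> 0%N].
Definition me (i : 'I_n) : mon n := [ffun j => nat_of_bool (j == i)].
Definition madd (a b : mon n) : mon n := [ffun i => (a i + b i)%N].

Lemma mleP (a b : mon n) : reflect (forall i, a i <= b i)%N (mle a b).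
Proof. exact: forallP. Qed.

Lemma mdeg_add (a b : mon n) : mdeg (madd a b) = (mdeg a + mdeg b)%N.
Proof. by rewrite /mdeg -big_split /=; apply: eq_bigr => i _; rewrite ffunE. Qed.

Lemma mdeg_m0 : mdeg m0 = 0%N.
Proof. by rewrite /mdeg big1 // => i _; rewrite ffunE. Qed.

Lemma mdeg_me i : mdeg (me i) = 1%N.
Proof.
rewrite /mdeg (bigD1 i) //= big1 ?ffunE ?eqxx // => j /negbTE ji.
by rewrite ffunE ji.
Qed.

Lemma mdeg0 (a : mon n) : mdeg a = 0%N -> a = m0.
Proof.
move=> /eqP; rewrite /mdeg sum_nat_eq0 => /forallP H.
by apply/ffunP => i; rewrite ffunE; apply/eqP; have := H i.
Qed.

Lemma le_mdeg (a : mon n) i : (a i <= mdeg a)%N.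
Proof. by rewrite /mdeg (bigD1 i) //= leq_addr. Qed.

Lemma mdeg_sub (a c : mon n) : mle a c -> mdeg c = (mdeg a + mdeg (msub c a))%N.
Proof.
move=> /mleP H; rewrite /mdeg -big_split /=; apply: eq_bigr => i _.
by rewrite ffunE subnKC.
Qed.

Lemma madd_sub (a c : mon n) : mle a c -> madd a (msub c a) = c.
Proof. by move=> /mleP H; apply/ffunP => i; rewrite !ffunE subnKC. Qed.

Lemma msub_add (a b : mon n) : msub (madd a b) a = b.
Proof. by apply/ffunP => i; rewrite !ffunE addKn. Qed.

Lemma maddC (a b : mon n) : madd a b = madd b a.
Proof. by apply/ffunP => i; rewrite !ffunE addnC. Qed.

Lemma mle_add (a b : mon n) : mle a (madd a b).
Proof. by apply/mleP => i; rewrite ffunE leq_addr. Qed.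

Lemma mle_m0 (a : mon n) : mle a m0 -> a = m0.
Proof.
move=> /mleP H; apply/ffunP => i; have := H i; rewrite !ffunE.
by rewrite leqn0 => /eqP.
Qed.

Lemma mle0 (a : mon n) : mle m0 a.
Proof. by apply/mleP => i; rewrite ffunE. Qed.

Lemma msub0 (a : mon n) : msub a m0 = a.
Proof. by apply/ffunP => i; rewrite !ffunE subn0. Qed.

Lemma msubxx (a : mon n) : msub a a = m0.
Proof. by apply/ffunP => i; rewrite !ffunE subnn. Qed.

Lemma me_inj : injective me.
Proof.
move=> i j /ffunP /(_ i); rewrite !ffunE eqxx.
by case: eqP.
Qed.

Lemma me_neq0 i : me i != m0.
Proof. by apply/eqP => /ffunP /(_ i); rewrite !ffunE eqxx. Qed.

Lemma mof_inj N : injective (@mof n N).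
Proof.
move=> e e' /ffunP H; apply/ffunP => i; apply: val_inj.
by have := H i; rewrite !ffunE.
Qed.

Definition mofi N (a : mon n) : {ffun 'I_n -> 'I_N.+1} := [ffun i => inord (a i)].

Lemma mofiK N (a : mon n) : (forall i, a i <= N)%N -> mof (mofi N a) = a.
Proof. by move=> H; apply/ffunP => i; rewrite !ffunE inordK // ltnS. Qed.

End Mon.
Arguments m0 {n}.

Lemma sum_single (k : fieldType) (T : finType) (P : pred T) (F : T -> k) x0 :
  (forall x, P x -> x != x0 -> F x = 0) ->
  \sum_(x | P x) F x = if P x0 then F x0 else 0.
Proof.
move=> H; rewrite big_mkcond (bigD1 x0) //= big1 ?addr0 // => x xn.
by case: ifP => // Px; rewrite H.
Qed.

Section Spoly.
Variables (k : fieldType) (n : nat).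
Implicit Types (f g h : spoly k n) (a b : mon n).

Lemma mofiK' N (e : {ffun 'I_n -> 'I_N.+1}) : mofi N (mof e) = e.
Proof. by apply/ffunP => i; rewrite !ffunE inord_val. Qed.

Lemma smonE a b : smon k a b = if b == a then 1 else 0.
Proof. by []. Qed.

Lemma sext (f g : spoly k n) : (forall x, f x = g x) -> f = g.
Proof. exact: functional_extensionality. Qed.

Lemma sfin_ind (P : spoly k n -> Prop) :
  P (@szero k n) -> (forall f g, P f -> P g -> P (sadd f g)) ->
  (forall (x : k) (a : mon n), P (sscale x (smon k a))) -> forall f, sfin f -> P f.
Proof.
move=> P0 PD PS f [d Hd].
have E : f = fun x => \sum_(e : {ffun 'I_n -> 'I_d.+1} | (mdeg (mof e) <= d)%N)
               f (mof e) * smon k (mof e) x.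
  apply: sext => x.
  rewrite (@sum_single _ _ _ _ (mofi d x)); last first.
    move=> e _ ne; rewrite smonE; case: eqP => [xe|]; last by rewrite mulr0.
    by move: ne; rewrite xe mofiK' eqxx.
  case: (leqP (mdeg x) d) => hx.
    have hm : mof (mofi d x) = x.
      by apply: mofiK => i; apply: leq_trans (le_mdeg x i) hx.
    by rewrite hm hx smonE eqxx mulr1.
  rewrite Hd //; case: ifP => // hle; rewrite smonE; case: eqP; last by rewrite mulr0.
  by move=> ex; move: hle; rewrite -ex leqNgt hx.
pose S (r : seq {ffun 'I_n -> 'I_d.+1}) := fun x : mon n =>
  \sum_(e <- r | (mdeg (mof e) <= d)%N) f (mof e) * smon k (mof e) x.
have key : forall r, P (S r).
  elim => [|e r IH].
    have -> : S [::] = @szero k n by apply: sext => x; rewrite /S big_nil.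
    exact: P0.
  case: (boolP (mdeg (mof e) <= d)%N) => he.
    have -> : S (e :: r) = sadd (sscale (f (mof e)) (smon k (mof e))) (S r).
      by apply: sext => x; rewrite /S big_cons he.
    by apply: PD.
  have -> : S (e :: r) = S r by apply: sext => x; rewrite /S big_cons (negbTE he).
  exact: IH.
rewrite E; exact: key.
Qed.

Variable p : 'I_n -> 'I_n -> k.

Lemma smul_monl a g (c : mon n) :
  smul p (smon k a) g c = if mle a c then twist p a (msub c a) * g (msub c a) else 0.
Proof.
rewrite /smul (@sum_single _ _ _ _ (mofi (mdeg c) a)); last first.
  move=> e _ ne; rewrite smonE; case: eqP => [ea|]; last by rewrite mulr0 mul0r.
  by move: ne; rewrite -ea mofiK' eqxx.
case: (boolP (mle a c)) => hac.
  have hm : mof (mofi (mdeg c) a) = a.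
    apply: mofiK => i; move/mleP: hac => /(_ i) h; exact: leq_trans h (le_mdeg c i).
  by rewrite hm hac smonE eqxx mulr1.
case: ifP => // h2; rewrite smonE; case: eqP => [ea|]; last by rewrite mulr0 mul0r.
by move: h2; rewrite ea (negbTE hac).
Qed.

Lemma smul_mon_mon a b :
  smul p (smon k a) (smon k b) = sscale (twist p a b) (smon k (madd a b)).
Proof.
apply: sext => c; rewrite smul_monl /sscale !smonE.
case: (c =P madd a b) => [->|ne].
  by rewrite mle_add msub_add eqxx.
case: ifP => hle; last by rewrite mulr0.
case: (msub c a =P b) => [eb|_]; last by rewrite !mulr0.
by case: ne; rewrite -eb madd_sub.
Qed.

Lemma smulDl f1 f2 g : smul p (sadd f1 f2) g = sadd (smul p f1 g) (smul p f2 g).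
Proof.
apply: sext => c; rewrite /smul /sadd -big_split /=.
by apply: eq_bigr => e _; rewrite mulrDr mulrDl.
Qed.

Lemma smulDr f g1 g2 : smul p f (sadd g1 g2) = sadd (smul p f g1) (smul p f g2).
Proof.
apply: sext => c; rewrite /smul /sadd -big_split /=.
by apply: eq_bigr => e _; rewrite mulrDr.
Qed.

Lemma smulZl x f g : smul p (sscale x f) g = sscale x (smul p f g).
Proof.
apply: sext => c; rewrite /smul /sscale mulr_sumr.
by apply: eq_bigr => e _; ring.
Qed.

Lemma smulZr x f g : smul p f (sscale x g) = sscale x (smul p f g).
Proof.
apply: sext => c; rewrite /smul /sscale mulr_sumr.
by apply: eq_bigr => e _; ring.
Qed.

Lemma smul0l g : smul p (@szero k n) g = @szero k n.
Proof.
by apply: sext => c; rewrite /smul big1 // => e _; rewrite /szero mulr0 mul0r.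
Qed.

Lemma smul0r f : smul p f (@szero k n) = @szero k n.
Proof.
by apply: sext => c; rewrite /smul big1 // => e _; rewrite /szero mulr0.
Qed.

End Spoly.

Lemma sum_two (k : fieldType) (T : finType) (P : pred T) (F : T -> k) x1 x2 :
  x1 != x2 ->
  (forall x, P x -> x != x1 -> x != x2 -> F x = 0) ->
  \sum_(x | P x) F x = (if P x1 then F x1 else 0) + (if P x2 then F x2 else 0).
Proof.
move=> ne H; rewrite big_mkcond (bigD1 x1) //= (bigD1 x2) 1?eq_sym //=.
rewrite big1 ?addr0 // => x /andP [h2 h1].
by case: ifP => // Px; rewrite H.
Qed.

Section Mon2.
Variable n : nat.
Lemma mdeg1 (a : mon n) : mdeg a = 1%N -> exists l, a = me l.
Proof.
move=> H.
have [l hl] : exists l, (0 < a l)%N.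
  apply/existsP; apply: contraTT (introT eqP H) => /existsPn hn.
  rewrite /mdeg big1 // => i _; have := hn i; by rewrite lt0n negbK => /eqP.
exists l; move: H; rewrite /mdeg (bigD1 l) //= => H.
have al : a l = 1%N.
  apply/eqP; rewrite eqn_leq hl andbT -H; exact: leq_addr.
move: H; rewrite al add1n => /eqP; rewrite eqSS sum_nat_eq0 => /forallP H.
apply/ffunP => i; rewrite ffunE; case: (i =P l) => [->|/eqP ne] //=.
by have := H i; rewrite ne /= => /eqP.
Qed.

Lemma mle_me_inv (a : mon n) l : mle a (me l) -> a = m0 \/ a = me l.
Proof.
move=> h; have := mdeg_sub h; rewrite mdeg_me.
case E: (mdeg a) => [|[|d]] /=.
- by left; apply: mdeg0.
- move=> _; right; case: (mdeg1 E) => l' al'; rewrite al' in h *.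
  by move/mleP: h => /(_ l'); rewrite !ffunE eqxx; case: eqP => // ->.
- lia.
Qed.

Lemma me_le_mon (l i j : 'I_n) : mle (me l) (madd (me i) (me j)) -> l = i \/ l = j.
Proof.
move/mleP => /(_ l); rewrite !ffunE eqxx.
by case: (l =P i) => [->|_]; [left|case: (l =P j) => [->|//]; right].
Qed.
End Mon2.

Section Spoly3.
Variables (k : fieldType) (n : nat) (p : 'I_n -> 'I_n -> k).
Implicit Types (f g h : spoly k n) (a b : mon n).

Definition ge r f := forall a, (mdeg a < r)%N -> f a = 0.

Lemma smul_vanish f g c :
  (forall a, mle a c -> f a * g (msub c a) = 0) -> smul p f g c = 0.
Proof.
move=> H; rewrite /smul big1 // => e he.
by rewrite -mulrA H ?mulr0.
Qed.

Lemma sfin0 : sfin (@szero k n). Proof. by exists 0%N. Qed.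
Lemma sfin_mon a : sfin (smon k a).
Proof.
exists (mdeg a) => b hb; rewrite smonE; case: eqP => // e.
by move: hb; rewrite e ltnn.
Qed.
Lemma sfinD f g : sfin f -> sfin g -> sfin (sadd f g).
Proof.
move=> [d1 h1] [d2 h2]; exists (maxn d1 d2) => a ha.
rewrite /sadd h1 ?h2 ?addr0 //; apply: leq_ltn_trans ha.
  exact: leq_maxr.
exact: leq_maxl.
Qed.
Lemma sfinB f g : sfin f -> sfin g -> sfin (ssub f g).
Proof.
move=> [d1 h1] [d2 h2]; exists (maxn d1 d2) => a ha.
rewrite /ssub h1 ?h2 ?subr0 //; apply: leq_ltn_trans ha.
  exact: leq_maxr.
exact: leq_maxl.
Qed.
Lemma sfinZ x f : sfin f -> sfin (sscale x f).
Proof. by move=> [d h]; exists d => a ha; rewrite /sscale h ?mulr0. Qed.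
Lemma sfin_comp d f : sfin (scomp d f).
Proof.
exists d => a ha; rewrite /scomp; case: eqP => // e.
by move: ha; rewrite e ltnn.
Qed.
Lemma sfin_one : sfin (@sone k n). Proof. exact: sfin_mon. Qed.
Lemma sfinM f g : sfin f -> sfin g -> sfin (smul p f g).
Proof.
move=> [d1 h1] [d2 h2]; exists (d1 + d2)%N => c hc; apply: smul_vanish => a ha.
move: hc; rewrite (mdeg_sub ha) => hc.
case: (leqP (mdeg a) d1) => h.
  by rewrite h2 ?mulr0 // -(ltn_add2l (mdeg a)); apply: leq_ltn_trans hc; rewrite leq_add2r.
by rewrite h1 ?mul0r.
Qed.

Lemma smul_ge r s f g : ge r f -> ge s g -> ge (r + s) (smul p f g).
Proof.
move=> h1 h2 c hc; apply: smul_vanish => a ha.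
move: hc; rewrite (mdeg_sub ha) => hc.
case: (ltnP (mdeg a) r) => h; first by rewrite h1 ?mul0r.
by rewrite h2 ?mulr0 //; lia.
Qed.

End Spoly3.

Section Coef.
Variables (k : fieldType) (n : nat) (p : 'I_n -> 'I_n -> k).
Implicit Types (f g h : spoly k n) (a b : mon n).

Lemma mofi_le a c : mle a c -> mof (mofi (mdeg c) a) = a.
Proof.
move=> /mleP h; apply: mofiK => i; exact: leq_trans (h i) (le_mdeg c i).
Qed.

Lemma smul_sum1 f g c a :
  mle a c -> (forall a', mle a' c -> a' != a -> f a' * g (msub c a') = 0) ->
  smul p f g c = twist p a (msub c a) * f a * g (msub c a).
Proof.
move=> hac H; rewrite /smul (@sum_single _ _ _ _ (mofi (mdeg c) a)).
  by rewrite mofi_le // hac.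
move=> e he ne; rewrite -mulrA H ?mulr0 //; apply: contra ne => /eqP <-.
by rewrite mofiK'.
Qed.

Lemma smul_sum2 f g c a1 a2 : a1 != a2 ->
  mle a1 c -> mle a2 c ->
  (forall a', mle a' c -> a' != a1 -> a' != a2 -> f a' * g (msub c a') = 0) ->
  smul p f g c = twist p a1 (msub c a1) * f a1 * g (msub c a1)
               + twist p a2 (msub c a2) * f a2 * g (msub c a2).
Proof.
move=> ne h1 h2 H; rewrite /smul (@sum_two _ _ _ _ (mofi (mdeg c) a1) (mofi (mdeg c) a2)).
- by rewrite !mofi_le // h1 h2.
- by apply: contra ne => /eqP /(congr1 (@mof n _)); rewrite !mofi_le // => ->.
move=> e he n1 n2; rewrite -mulrA H ?mulr0 //.
  by apply: contra n1 => /eqP <-; rewrite mofiK'.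
by apply: contra n2 => /eqP <-; rewrite mofiK'.
Qed.

Lemma twist0l b : twist p m0 b = 1.
Proof. by rewrite /twist big1 // => i _; rewrite big1 // => j _; rewrite ffunE mul0n expr0. Qed.
Lemma twist0r a : twist p a m0 = 1.
Proof. by rewrite /twist big1 // => i _; rewrite big1 // => j _; rewrite ffunE muln0 expr0. Qed.

Lemma twist_me i j : twist p (me i) (me j) = if (j < i)%N then p j i else 1.
Proof.
rewrite /twist (bigD1 i) //=.
rewrite [X in _ * X]big1 ?mulr1; last first.
  move=> I hI; rewrite big1 // => J _; by rewrite !ffunE (negbTE hI) mul0n expr0.
case: ifP => hji.
  rewrite (bigD1 j) //= big1 ?mulr1; first by rewrite !ffunE !eqxx expr1.
  by move=> J /andP [_ /negbTE hJ]; rewrite !ffunE hJ eqxx muln0 expr0.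
rewrite big1 // => J hJ; rewrite !ffunE eqxx mul1n.
case: (J =P j) => [eJ|_]; last by rewrite expr0.
by move: hJ hji; rewrite eJ => ->.
Qed.

Lemma smul_at0 f g : smul p f g m0 = f m0 * g m0.
Proof.
rewrite (@smul_sum1 _ _ _ m0) ?mle0 ?msub0 ?twist0l ?mul1r //.
by move=> a' h ne; move: ne; rewrite (mle_m0 h) eqxx.
Qed.

Lemma smul_at_me f g l : smul p f g (me l) = f (me l) * g m0 + f m0 * g (me l).
Proof.
rewrite (@smul_sum2 _ _ _ (me l) m0) ?mle0 ?msubxx ?msub0 ?twist0l ?twist0r ?mul1r //.
- by rewrite me_neq0.
- by apply/mleP.
by move=> a' h n1 n2; case: (mle_me_inv h) => e; [move: n2|move: n1]; rewrite e eqxx.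
Qed.

Lemma msub_me2 (i j : 'I_n) : msub (madd (me i) (me j)) (me i) = me j.
Proof. exact: msub_add. Qed.
Lemma msub_me2' (i j : 'I_n) : msub (madd (me i) (me j)) (me j) = me i.
Proof. by rewrite maddC msub_add. Qed.

Lemma smul_at2 f g (i j : 'I_n) : ge 1 f -> ge 1 g -> i != j ->
  smul p f g (madd (me i) (me j)) =
    twist p (me i) (me j) * f (me i) * g (me j) + twist p (me j) (me i) * f (me j) * g (me i).
Proof.
move=> hf hg ne.
rewrite (@smul_sum2 _ _ _ (me i) (me j)) ?msub_me2 ?msub_me2' //.
- by apply: contra ne => /eqP /me_inj ->.
- exact: mle_add.
- by rewrite maddC mle_add.
move=> a' h n1 n2; have := mdeg_sub h; rewrite mdeg_add !mdeg_me.
case E: (mdeg a') => [|[|d]] /= hd.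
- by rewrite hf ?mul0r // E.
- case: (mdeg1 E) => l el; rewrite el in h n1 n2.
  by case: (me_le_mon h) => el'; [move: n1|move: n2]; rewrite el' eqxx.
- by rewrite hg ?mulr0 //; lia.
Qed.

Lemma smul_at2' f g (i : 'I_n) : ge 1 f -> ge 1 g ->
  smul p f g (madd (me i) (me i)) = f (me i) * g (me i).
Proof.
move=> hf hg.
rewrite (@smul_sum1 _ _ _ (me i)) ?msub_me2 ?twist_me ?ltnn ?mul1r //.
- exact: mle_add.
move=> a' h n1; have := mdeg_sub h; rewrite mdeg_add !mdeg_me.
case E: (mdeg a') => [|[|d]] /= hd.
- by rewrite hf ?mul0r // E.
- case: (mdeg1 E) => l el; rewrite el in h n1.
  by case: (me_le_mon h) => el'; move: n1; rewrite el' eqxx.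
- by rewrite hg ?mulr0 //; lia.
Qed.

End Coef.

Section Ideal.
Variables (k : fieldType) (n : nat) (p : 'I_n -> 'I_n -> k) (I : spoly k n -> Prop).
Hypothesis HI : graded_ideal p I.
Implicit Types (f g h : spoly k n) (a b : mon n).

Lemma smulBl f g h : smul p (ssub f g) h = ssub (smul p f h) (smul p g h).
Proof.
apply: sext => c; rewrite /smul /ssub -sumrB; apply: eq_bigr => e _; ring.
Qed.
Lemma smulBr f g h : smul p f (ssub g h) = ssub (smul p f g) (smul p f h).
Proof.
apply: sext => c; rewrite /smul /ssub -sumrB; apply: eq_bigr => e _; ring.
Qed.

Lemma I_ext f g : I f -> (forall x, f x = g x) -> I g.
Proof. by move=> h e; have E := sext e; rewrite -E. Qed.

Lemma I0 : I (@szero k n). Proof. exact: gi_zero HI. Qed.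
Lemma I_add f g : I f -> I g -> I (sadd f g). Proof. exact: (gi_add HI). Qed.
Lemma I_scale x f : I f -> I (sscale x f). Proof. exact: (gi_scale HI). Qed.
Lemma I_sub f g : I f -> I g -> I (ssub f g).
Proof.
move=> hf hg; apply: (I_ext (I_add hf (I_scale (-1) hg))) => x.
by rewrite /sadd /sscale /ssub mulN1r.
Qed.
Lemma I_comp d f : I f -> I (scomp d f). Proof. exact: (gi_graded HI). Qed.
Lemma I_fin f : I f -> sfin f. Proof. exact: (gi_fin HI). Qed.

Definition eqv f g := I (ssub f g).

Lemma eqv_refl f : eqv f f.
Proof. by apply: (I_ext I0) => x; rewrite /ssub subrr. Qed.
Lemma eqv_sym f g : eqv f g -> eqv g f.
Proof. by move=> h; apply: (I_ext (I_scale (-1) h)) => x; rewrite /sscale /ssub; ring. Qed.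
Lemma eqv_trans f g h : eqv f g -> eqv g h -> eqv f h.
Proof. by move=> h1 h2; apply: (I_ext (I_add h1 h2)) => x; rewrite /sadd /ssub; ring. Qed.
Lemma eqv_eq f g : f = g -> eqv f g.
Proof. by move=> ->; apply: eqv_refl. Qed.
Lemma eqv_add f f' g g' : eqv f f' -> eqv g g' -> eqv (sadd f g) (sadd f' g').
Proof. by move=> h1 h2; apply: (I_ext (I_add h1 h2)) => x; rewrite /sadd /ssub; ring. Qed.
Lemma eqv_sub f f' g g' : eqv f f' -> eqv g g' -> eqv (ssub f g) (ssub f' g').
Proof. by move=> h1 h2; apply: (I_ext (I_sub h1 h2)) => x; rewrite /sadd /ssub; ring. Qed.
Lemma eqv_scale x f f' : eqv f f' -> eqv (sscale x f) (sscale x f').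
Proof. by move=> h1; apply: (I_ext (I_scale x h1)) => y; rewrite /sscale /ssub; ring. Qed.
Lemma eqv_comp d f f' : eqv f f' -> eqv (scomp d f) (scomp d f').
Proof.
move=> h1; apply: (I_ext (I_comp d h1)) => y; rewrite /scomp /ssub.
by case: ifP => //; rewrite subrr.
Qed.
Lemma eqv_mul f f' g g' : sfin f -> sfin f' -> sfin g -> sfin g' ->
  eqv f f' -> eqv g g' -> eqv (smul p f g) (smul p f' g').
Proof.
move=> ff ff' fg fg' h1 h2.
have A : I (smul p (ssub f f') g) by apply: (gi_mulr HI).
have B : I (smul p f' (ssub g g')) by apply: (gi_mull HI).
apply: (I_ext (I_add A B)) => x; rewrite smulBl smulBr /sadd /ssub; ring.
Qed.

Lemma I_graded_sum h : sfin h -> (forall d, I (scomp d h)) -> I h.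
Proof.
move=> [B hB] H.
pose S N := fun a : mon n => if (mdeg a < N)%N then h a else 0.
have key : forall N, I (S N).
  elim => [|N IH].
    by apply: (I_ext I0) => x; rewrite /S ltn0.
  apply: (I_ext (I_add IH (H N))) => x; rewrite /S /sadd /scomp ltnS.
  by case: (ltngtP (mdeg x) N) => hx; rewrite ?addr0 ?add0r.
apply: (I_ext (key B.+1)) => x; rewrite /S; case: ltnP => // hx.
by rewrite hB.
Qed.

Lemma I_bigsum (T : Type) (r : seq T) (P : pred T) (F : T -> spoly k n) :
  (forall t, P t -> I (F t)) -> I (fun x => \sum_(t <- r | P t) F t x).
Proof.
move=> H; elim: r => [|t r IH].
  by apply: (I_ext I0) => x; rewrite big_nil.
case: (boolP (P t)) => Pt.
  by apply: (I_ext (I_add (H t Pt) IH)) => x; rewrite big_cons Pt.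
by apply: (I_ext IH) => x; rewrite big_cons (negbTE Pt).
Qed.

Lemma eqv_low r f g : ideal_in_ge r I -> eqv f g -> forall a, (mdeg a < r)%N -> f a = g a.
Proof.
move=> hr h a ha; have := hr _ h a ha; rewrite /ssub => /eqP; rewrite subr_eq0.
by move/eqP.
Qed.

End Ideal.

Section More.
Variables (k : fieldType) (n : nat) (p : 'I_n -> 'I_n -> k).
Implicit Types (f g h u v : spoly k n) (a b : mon n).

Lemma sfin_ind2 (P : spoly k n -> Prop) :
  P (@szero k n) -> (forall f g, sfin f -> sfin g -> P f -> P g -> P (sadd f g)) ->
  (forall (x : k) (a : mon n), P (sscale x (smon k a))) -> forall f, sfin f -> P f.
Proof.
move=> P0 PD PS.
pose Q f := sfin f /\ P f.
suff H : forall f, sfin f -> Q f by move=> f /H [].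
apply: sfin_ind.
- by split; [exact: sfin0|].
- by move=> f g [h1 h2] [h3 h4]; split; [exact: sfinD|exact: PD].
- by move=> x a; split; [apply: sfinZ; exact: sfin_mon|].
Qed.

Lemma comp_mul_ge i j u v : ge i u -> ge j v ->
  scomp (i + j) (smul p u v) = smul p (scomp i u) (scomp j v).
Proof.
move=> hu hv; apply: sext => c; rewrite /scomp.
case: eqP => hc.
  rewrite /smul; apply: eq_bigr => e he.
  have hd := mdeg_sub he.
  case: (ltngtP (mdeg (mof e)) i) => h.
  - by rewrite hu // !mulr0 !mul0r.
  - rewrite (hv (msub c (mof e))); first by rewrite !mulr0 !mul0r.
    lia.
  - have -> : mdeg (msub c (mof e)) = j by lia.
    by rewrite eqxx.
apply/esym/smul_vanish => a ha.
case: eqP => h1; last by rewrite mul0r.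
by case: eqP => h2; [have := mdeg_sub ha; lia|rewrite mulr0].
Qed.

Lemma comp_mul_dec d u v :
  scomp d (smul p u v) =
  (fun c => \sum_(i < d.+1) smul p (scomp i u) (scomp (d - i) v) c).
Proof.
apply: sext => c; rewrite /scomp.
case: eqP => hc.
  rewrite /smul exchange_big /=; apply: eq_bigr => e he.
  have hd := mdeg_sub he.
  rewrite (@sum_single _ _ _ _ (inord (mdeg (mof e)))) /=.
    rewrite inordK; last by lia.
    have -> : mdeg (msub c (mof e)) = (d - mdeg (mof e))%N by lia.
    by rewrite !eqxx.
  move=> i _ ne; case: eqP => h; last by rewrite mulr0 mul0r.
  by move: ne; rewrite h inord_val eqxx.
rewrite big1 // => i _; apply: smul_vanish => a ha.
case: eqP => h1; last by rewrite mul0r.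
case: eqP => h2; last by rewrite mulr0.
have := mdeg_sub ha; have := ltn_ord i; lia.
Qed.

Hypothesis pnz : forall i j, p i j != 0.

Lemma twist_neq0 a b : twist p a b != 0.
Proof.
rewrite /twist; apply/prodf_neq0 => i _; apply/prodf_neq0 => j _.
exact: expf_neq0.
Qed.

Lemma smon_succ a i :
  smon k (madd a (me i)) = sscale (twist p a (me i))^-1 (smul p (smon k a) (sX k i)).
Proof.
apply: sext => x; rewrite smul_mon_mon /sscale mulrA mulVf ?mul1r //.
exact: twist_neq0.
Qed.

Lemma smon_pred a : mdeg a <> 0%N -> exists i b, a = madd b (me i) /\ mdeg b = (mdeg a).-1.
Proof.
move=> hd.
have [i hi] : exists i, (0 < a i)%N.
  case: (boolP [exists i, (0 < a i)%N]) => [/existsP //| /existsPn hn].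
  case: hd; rewrite /mdeg big1 // => l _; have := hn l; by rewrite lt0n negbK => /eqP.
exists i, (msub a (me i)).
have hle : mle (me i) a by apply/mleP => l; rewrite ffunE; case: eqP => // ->.
split; first by rewrite maddC madd_sub.
by have := mdeg_sub hle; rewrite mdeg_me; lia.
Qed.

Lemma smul_one_one : smul p (@sone k n) (@sone k n) = @sone k n.
Proof.
rewrite /sone smul_mon_mon twist0l; apply: sext => x.
rewrite /sscale mul1r; congr smon.
by apply/ffunP => i; rewrite !ffunE.
Qed.

Lemma der0 (psi D : spoly k n -> k) :
  (forall f g, sfin f -> sfin g -> D (sadd f g) = D f + D g) ->
  (forall x f, sfin f -> D (sscale x f) = x * D f) ->
  (forall f g, sfin f -> sfin g -> D (smul p f g) = D f * psi g + psi f * D g) ->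
  psi (@sone k n) = 1 ->
  (forall i, D (sX k i) = 0) -> forall f, sfin f -> D f = 0.
Proof.
move=> Dadd Dsc Dmul psi1 DX.
have Dmon : forall d a, mdeg a = d -> D (smon k a) = 0.
  elim=> [|d IH] a ha.
    rewrite (mdeg0 ha); have e : smon k m0 = @sone k n by [].
    rewrite e; have := Dmul _ _ (sfin_one k n) (sfin_one k n).
    rewrite smul_one_one psi1 mulr1 mul1r => h.
    by apply: (@addrI _ (D (@sone k n))); rewrite -h addr0.
  have [|i [b [ea hb]]] := smon_pred (a := a); first by rewrite ha.
  rewrite ea.
  rewrite smon_succ Dsc; last by apply: sfinM; exact: sfin_mon.
  rewrite Dmul; try exact: sfin_mon.
  by rewrite DX (IH b) ?mulr0 ?mul0r ?addr0 ?mulr0 // hb ha.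
have D0 : D (@szero k n) = 0.
  have -> : @szero k n = sscale 0 (@szero k n) by apply: sext => x; rewrite /sscale mul0r.
  by rewrite Dsc ?mul0r //; exact: sfin0.
apply: sfin_ind2 => //.
- by move=> f g hf hg h1 h2; rewrite Dadd // h1 h2 addr0.
- by move=> x a; rewrite Dsc ?(Dmon _ a erefl) ?mulr0 //; exact: sfin_mon.
Qed.

Lemma char0 (psi : spoly k n -> k) :
  (forall f g, sfin f -> sfin g -> psi (sadd f g) = psi f + psi g) ->
  (forall x f, sfin f -> psi (sscale x f) = x * psi f) ->
  (forall f g, sfin f -> sfin g -> psi (smul p f g) = psi f * psi g) ->
  psi (@sone k n) = 1 ->
  (forall i, psi (sX k i) = 0) -> forall f, sfin f -> psi f = f m0.
Proof.
move=> Dadd Dsc Dmul psi1 DX.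
have Dmon : forall d a, mdeg a = d.+1 -> psi (smon k a) = 0.
  move=> d a ha.
  have [|i [b [ea hb]]] := smon_pred (a := a); first by rewrite ha.
  rewrite ea smon_succ Dsc; last by apply: sfinM; exact: sfin_mon.
  by rewrite Dmul ?DX ?mulr0 //; exact: sfin_mon.
have D0 : psi (@szero k n) = 0.
  have -> : @szero k n = sscale 0 (@szero k n) by apply: sext => x; rewrite /sscale mul0r.
  by rewrite Dsc ?mul0r //; exact: sfin0.
apply: sfin_ind2 => //.
- by move=> f g hf hg h1 h2; rewrite Dadd // h1 h2.
- move=> x a; rewrite Dsc; last exact: sfin_mon.
  rewrite /sscale smonE; case E: (mdeg a) => [|d].
    by rewrite (mdeg0 E) eqxx psi1.
  rewrite (Dmon d a E); case: eqP => // e.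
  by move: E; rewrite -e mdeg_m0.
Qed.

End More.

Section Maps.
Variables (k : fieldType) (s t : nat) (ps : 'I_s -> 'I_s -> k) (pt : 'I_t -> 'I_t -> k).
Variables (IS : spoly k s -> Prop) (IT : spoly k t -> Prop) (Phi : spoly k s -> spoly k t).
Hypotheses (HS : graded_ideal ps IS) (HT : graded_ideal pt IT)
  (HPhi : alg_iso_quot ps pt IS IT Phi).
Implicit Types (f g h u v : spoly k s).

Local Notation eqT := (eqv IT).
Local Notation eqS := (eqv IS).

Lemma Phi_fin f : sfin f -> sfin (Phi f). Proof. exact: (ai_fin HPhi). Qed.
Lemma Phi_add f g : sfin f -> sfin g -> eqT (Phi (sadd f g)) (sadd (Phi f) (Phi g)).
Proof. exact: (ai_add HPhi). Qed.
Lemma Phi_scale x f : sfin f -> eqT (Phi (sscale x f)) (sscale x (Phi f)).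
Proof. exact: (ai_scale HPhi). Qed.
Lemma Phi_mul f g : sfin f -> sfin g -> eqT (Phi (smul ps f g)) (smul pt (Phi f) (Phi g)).
Proof. exact: (ai_mul HPhi). Qed.
Lemma Phi_cong f g : sfin f -> sfin g -> eqS f g -> eqT (Phi f) (Phi g).
Proof. exact: (ai_wd HPhi). Qed.
Lemma Phi_one : eqT (Phi (@sone k s)) (@sone k t).
Proof. exact: (ai_one HPhi). Qed.

Lemma Phi_zero : eqT (Phi (@szero k s)) (@szero k t).
Proof.
have e : @szero k s = sscale 0 (@szero k s) by apply: (@sext k _) => x; rewrite /sscale mul0r.
have := Phi_scale 0 (sfin0 k s); rewrite -e => h; apply: (eqv_trans HT h).
by apply: (eqv_eq HT); apply: (@sext k _) => x; rewrite /sscale mul0r.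
Qed.

Lemma Phi_sub f g : sfin f -> sfin g -> eqT (Phi (ssub f g)) (ssub (Phi f) (Phi g)).
Proof.
move=> hf hg.
have e : ssub f g = sadd f (sscale (-1) g) by apply: (@sext k _) => x; rewrite /sadd /sscale /ssub mulN1r.
rewrite e; apply: (eqv_trans HT (Phi_add hf (sfinZ _ hg))).
apply: (eqv_trans HT (eqv_add HT (eqv_refl HT _) (Phi_scale (-1) hg))).
by apply: (eqv_eq HT); apply: (@sext k _) => x; rewrite /sadd /sscale /ssub mulN1r.
Qed.

Lemma Phi_IS f : IS f -> eqT (Phi f) (@szero k t).
Proof.
move=> hf; have ff := I_fin HS hf.
apply: (eqv_trans HT _ Phi_zero); apply: Phi_cong => //; first exact: sfin0.
by apply: (I_ext hf) => x; rewrite /ssub /szero subr0.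
Qed.

Lemma Phi_lin (T : Type) (r : seq T) (c : T -> k) (w : T -> spoly k s) :
  (forall x, sfin (w x)) ->
  eqT (Phi (fun a => \sum_(x <- r) c x * w x a))
      (fun a => \sum_(x <- r) c x * Phi (w x) a).
Proof.
move=> hw; elim: r => [|x r IH].
  have -> : (fun a : mon s => \sum_(x <- [::]) c x * w x a) = @szero k s.
    by apply: (@sext k _) => a; rewrite big_nil.
  apply: (eqv_trans HT Phi_zero); apply: (eqv_eq HT); apply: (@sext k _) => a; by rewrite big_nil.
have fr : sfin (fun a => \sum_(x <- r) c x * w x a).
  elim: r {IH} => [|y r [d hd]]; first by exists 0%N => a _; rewrite big_nil.
  have [d' hd'] := hw y; exists (maxn d d') => a ha; rewrite big_cons hd ?hd' ?mulr0 ?addr0 //.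
    by apply: leq_ltn_trans ha; exact: leq_maxr.
  by apply: leq_ltn_trans ha; exact: leq_maxl.
have -> : (fun a => \sum_(x0 <- x :: r) c x0 * w x0 a) =
   sadd (sscale (c x) (w x)) (fun a => \sum_(x <- r) c x * w x a).
  by apply: (@sext k _) => a; rewrite big_cons.
apply: (eqv_trans HT (Phi_add (sfinZ _ (hw x)) fr)).
apply: (eqv_trans HT (eqv_add HT (Phi_scale (c x) (hw x)) IH)).
by apply: (eqv_eq HT); apply: (@sext k _) => a; rewrite big_cons.
Qed.

Hypothesis HT2 : ideal_in_ge 2 IT.

Definition psi f := Phi f m0.
Definition Dd (b : 'I_t) f := Phi f (me b).

Lemma low0 (F G : spoly k t) : eqT F G -> F m0 = G m0.
Proof. by move=> h; apply: (eqv_low HT2 h); rewrite mdeg_m0. Qed.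
Lemma low1 (F G : spoly k t) b : eqT F G -> F (me b) = G (me b).
Proof. by move=> h; apply: (eqv_low HT2 h); rewrite mdeg_me. Qed.

Lemma psi_add f g : sfin f -> sfin g -> psi (sadd f g) = psi f + psi g.
Proof. by move=> hf hg; rewrite /psi (low0 (Phi_add hf hg)). Qed.
Lemma psi_scale x f : sfin f -> psi (sscale x f) = x * psi f.
Proof. by move=> hf; rewrite /psi (low0 (Phi_scale x hf)). Qed.
Lemma psi_mul f g : sfin f -> sfin g -> psi (smul ps f g) = psi f * psi g.
Proof. by move=> hf hg; rewrite /psi (low0 (Phi_mul hf hg)) smul_at0. Qed.
Lemma psi_one : psi (@sone k s) = 1.
Proof. by rewrite /psi (low0 Phi_one) /sone smonE eqxx. Qed.
Lemma psi_IS f : IS f -> psi f = 0.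
Proof. by move=> h; rewrite /psi (low0 (Phi_IS h)). Qed.

Lemma D_add b f g : sfin f -> sfin g -> Dd b (sadd f g) = Dd b f + Dd b g.
Proof. by move=> hf hg; rewrite /Dd (low1 _ (Phi_add hf hg)). Qed.
Lemma D_scale b x f : sfin f -> Dd b (sscale x f) = x * Dd b f.
Proof. by move=> hf; rewrite /Dd (low1 _ (Phi_scale x hf)). Qed.
Lemma D_mul b f g : sfin f -> sfin g -> Dd b (smul ps f g) = Dd b f * psi g + psi f * Dd b g.
Proof. by move=> hf hg; rewrite /Dd (low1 _ (Phi_mul hf hg)) smul_at_me. Qed.

Variable Psi : spoly k t -> spoly k s.
Hypotheses (Psi_fin : forall h : spoly k t, sfin h -> sfin (Psi h))
  (PhiPsi : forall h : spoly k t, sfin h -> eqT (Phi (Psi h)) h).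

Lemma D_Psi (b c : 'I_t) : Dd b (Psi (sX k c)) = if b == c then 1 else 0.
Proof.
rewrite /Dd (low1 _ (PhiPsi (sfin_mon _ _))) /sX smonE.
by case: (b =P c) => [->|ne]; [rewrite eqxx|case: eqP => // /me_inj].
Qed.

Lemma tangent (i0 : 'I_s) (b1 b2 : 'I_t) : b1 != b2 ->
  (forall i, ps i i = 1) -> (forall i j, ps i j != 0) ->
  (forall b (j : 'I_s), j != i0 -> Dd b (sX k j) = 0) -> False.
Proof.
move=> ne pdiag pnz H.
pose DD f := Dd b1 (sX k i0) * Dd b2 f - Dd b2 (sX k i0) * Dd b1 f.
have DD0 : forall f, sfin f -> DD f = 0.
  apply: (@der0 _ _ ps pnz psi).
  - by move=> f g hf hg; rewrite /DD !D_add //; ring.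
  - by move=> x f hf; rewrite /DD !D_scale //; ring.
  - by move=> f g hf hg; rewrite /DD !D_mul //; ring.
  - exact: psi_one.
  - move=> j; rewrite /DD; case: (j =P i0) => [->|/eqP nj]; first by ring.
    by rewrite (H b2 j nj) (H b1 j nj) !mulr0 subrr.
have h1 := DD0 _ (Psi_fin (sfin_mon k (me b1))).
have h2 := DD0 _ (Psi_fin (sfin_mon k (me b2))).
move: h1 h2; rewrite /DD -!/(sX k _) !D_Psi eqxx (negbTE ne) eq_sym (negbTE ne).
rewrite !mulr0 !mulr1 sub0r subr0 => /eqP; rewrite oppr_eq0 => /eqP z2; rewrite eqxx mulr1 => z1.
have D1 : forall f, sfin f -> Dd b1 f = 0.
  apply: (@der0 _ _ ps pnz psi).
  - by move=> f g hf hg; rewrite !D_add.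
  - by move=> x f hf; rewrite !D_scale.
  - by move=> f g hf hg; rewrite !D_mul.
  - exact: psi_one.
  - move=> j; case: (j =P i0) => [->|/eqP nj]; [exact: z1|exact: H].
have := D1 _ (Psi_fin (sfin_mon k (me b1))); rewrite -/(sX k _) D_Psi eqxx.
by move/eqP; rewrite oner_eq0.
Qed.

End Maps.

Section GrA.
Variables (k : fieldType) (s t : nat) (ps : 'I_s -> 'I_s -> k) (pt : 'I_t -> 'I_t -> k).
Variables (IS : spoly k s -> Prop) (IT : spoly k t -> Prop) (Phi : spoly k s -> spoly k t).
Hypotheses (HS : graded_ideal ps IS) (HT : graded_ideal pt IT)
  (HPhi : alg_iso_quot ps pt IS IT Phi).
Hypothesis psnz : forall i j, ps i j != 0.
Hypothesis Phi_gen : forall i, Phi (sX k i) m0 = 0.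
Implicit Types (f g h u v : spoly k s).

Local Notation eqT := (eqv IT).
Local Notation eqS := (eqv IS).

Definition rest n r (f : spoly k n) : spoly k n := fun a => if (r <= mdeg a)%N then f a else 0.

Lemma sfin_rest n r (f : spoly k n) : sfin f -> sfin (rest r f).
Proof. by move=> [d hd]; exists d => a ha; rewrite /rest hd //; case: ifP. Qed.

Lemma ge_add n r (f g : spoly k n) : ge r f -> ge r g -> ge r (sadd f g).
Proof. by move=> h1 h2 a ha; rewrite /sadd h1 ?h2 ?addr0. Qed.
Lemma ge_scale n r x (f : spoly k n) : ge r f -> ge r (sscale x f).
Proof. by move=> h1 a ha; rewrite /sscale h1 ?mulr0. Qed.

Lemma Phi_gen_ge i : ge 1 (Phi (sX k i)).
Proof. by move=> a; rewrite ltnS leqn0 => /eqP /mdeg0 ->. Qed.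

Lemma L1 d f : sfin f -> ge d f -> exists2 h, sfin h /\ ge d h & eqT (Phi f) h.
Proof.
suff H : forall f, sfin f -> exists2 h, sfin h /\ ge d h & eqT (Phi (rest d f)) h.
  move=> ff gf; have [h hh e] := H f ff; exists h => //.
  have -> : f = rest d f; last by [].
  apply: sext => a; rewrite /rest; case: leqP => // ha; exact: gf.
elim: d => [|d IH] f0 ff0.
  exists (Phi f0); first by split; [exact: (Phi_fin HPhi)|move=> a].
  have -> : rest 0 f0 = f0 by apply: sext => a; rewrite /rest leq0n.
  exact: (eqv_refl HT).
move: f0 ff0; apply: sfin_ind2.
- exists (@szero k t); first by split; [exact: sfin0|move=> a _].
  have -> : rest d.+1 (@szero k s) = @szero k s by apply: sext => a; rewrite /rest; case: ifP.
  exact: (Phi_zero HT HPhi).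
- move=> f1 g1 hf hg [h1 [fh1 gh1] e1] [h2 [fh2 gh2] e2].
  exists (sadd h1 h2); first by split; [exact: sfinD|exact: ge_add].
  have -> : rest d.+1 (sadd f1 g1) = sadd (rest d.+1 f1) (rest d.+1 g1).
    by apply: sext => a; rewrite /rest /sadd; case: ifP => //; rewrite addr0.
  apply: (eqv_trans HT (Phi_add HPhi (sfin_rest _ hf) (sfin_rest _ hg))).
  exact: (eqv_add HT).
- move=> x a; case: (leqP d.+1 (mdeg a)) => ha; last first.
    exists (@szero k t); first by split; [exact: sfin0|move=> b _].
    have -> : rest d.+1 (sscale x (smon k a)) = @szero k s.
      apply: sext => b; rewrite /rest /sscale smonE; case: ifP => // hb.
      by case: eqP => [eb|]; [move: hb; rewrite eb leqNgt ha|rewrite mulr0].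
    exact: (Phi_zero HT HPhi).
  have -> : rest d.+1 (sscale x (smon k a)) = sscale x (smon k a).
    apply: sext => b; rewrite /rest /sscale smonE; case: ifP => // hb.
    by case: eqP => [eb|]; [move: hb; rewrite eb ha|rewrite mulr0].
  have [|i [b [ea hb]]] := smon_pred (a := a); first by move=> e; move: ha; rewrite e.
  have fb := sfin_mon k b.
  have [h' [fh' gh'] e'] := IH _ fb.
  have erb : rest d (smon k b) = smon k b.
    apply: sext => c; rewrite /rest smonE; case: ifP => // hc.
    by case: eqP => // ec; move: hc; rewrite ec hb; lia.
  rewrite erb in e'.
  pose tw := (twist ps b (me i))^-1.
  exists (sscale (x * tw) (smul pt h' (Phi (sX k i)))).
    split; first by apply: sfinZ; apply: sfinM => //; apply: (Phi_fin HPhi); exact: sfin_mon.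
    apply: ge_scale; rewrite -addn1; apply: smul_ge => //; exact: Phi_gen_ge.
  rewrite ea (smon_succ psnz).
  have fX : sfin (sX k i) by exact: sfin_mon.
  have fbX : sfin (smul ps (smon k b) (sX k i)) by exact: sfinM.
  have -> : sscale x (sscale tw (smul ps (smon k b) (sX k i)))
          = sscale (x * tw) (smul ps (smon k b) (sX k i)).
    by apply: sext => c; rewrite /sscale mulrA.
  apply: (eqv_trans HT (Phi_scale HPhi _ fbX)); apply: (eqv_scale HT).
  apply: (eqv_trans HT (Phi_mul HPhi fb fX)).
  apply: (eqv_mul HT) => //; try apply: (Phi_fin HPhi) => //.
  exact: (eqv_refl HT).
Qed.


Lemma scompB n d (f g : spoly k n) : scomp d (ssub f g) = ssub (scomp d f) (scomp d g).
Proof. by apply: sext => a; rewrite /scomp /ssub; case: ifP => //; rewrite subrr. Qed.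
Lemma scompD n d (f g : spoly k n) : scomp d (sadd f g) = sadd (scomp d f) (scomp d g).
Proof. by apply: sext => a; rewrite /scomp /sadd; case: ifP => //; rewrite addr0. Qed.
Lemma scompZ n d x (f : spoly k n) : scomp d (sscale x f) = sscale x (scomp d f).
Proof. by apply: sext => a; rewrite /scomp /sscale; case: ifP => //; rewrite mulr0. Qed.
Lemma scompK n d (f : spoly k n) : scomp d (scomp d f) = scomp d f.
Proof. by apply: sext => a; rewrite /scomp; case: (mdeg a == d). Qed.
Lemma scomp_ne n d e (f : spoly k n) : d != e -> scomp d (scomp e f) = @szero k n.
Proof.
move=> ne; apply: sext => a; rewrite /scomp; case: eqP => // ->.
by rewrite (negbTE ne).
Qed.
Lemma scomp0 n d : scomp d (@szero k n) = @szero k n.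
Proof. by apply: sext => a; rewrite /scomp; case: (mdeg a == d). Qed.
Lemma ge_comp n i (f : spoly k n) : ge i (scomp i f).
Proof. by move=> a ha; rewrite /scomp; case: eqP => // e; move: ha; rewrite e ltnn. Qed.

Definition Gm (f : spoly k s) : spoly k t := fun a => Phi (scomp (mdeg a) f) a.

Lemma scomp_Gm d f : scomp d (Gm f) = scomp d (Phi (scomp d f)).
Proof. by apply: sext => a; rewrite /scomp /Gm; case: eqP => // ->. Qed.

Lemma Gm_fin f : sfin f -> sfin (Gm f).
Proof.
move=> [df hf]; have [dz hz] := Phi_fin HPhi (sfin0 k s).
exists (maxn df dz) => a ha; rewrite /Gm.
have -> : scomp (mdeg a) f = @szero k s.
  apply: sext => b; rewrite /scomp; case: eqP => // e; rewrite hf // e.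
  by apply: leq_ltn_trans ha; exact: leq_maxl.
by rewrite hz //; apply: leq_ltn_trans ha; exact: leq_maxr.
Qed.

Lemma Gm_eqv f (H : spoly k t) : sfin f -> sfin H ->
  (forall d, eqT (scomp d (Phi (scomp d f))) (scomp d H)) -> eqT (Gm f) H.
Proof.
move=> ff fH hd; apply: (I_graded_sum HT); first by apply: sfinB => //; exact: Gm_fin.
by move=> d; rewrite scompB scomp_Gm; exact: hd.
Qed.

Lemma Gm_wd f g : sfin f -> sfin g -> eqS f g -> eqT (Gm f) (Gm g).
Proof.
move=> ff fg e; apply: Gm_eqv => //; first exact: Gm_fin.
move=> d; rewrite scomp_Gm; apply: (eqv_comp HT); apply: (Phi_cong HPhi); try exact: sfin_comp.
exact: (eqv_comp HS).
Qed.

Lemma Gm_add f g : sfin f -> sfin g -> eqT (Gm (sadd f g)) (sadd (Gm f) (Gm g)).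
Proof.
move=> ff fg; apply: Gm_eqv; first exact: sfinD.
  by apply: sfinD; exact: Gm_fin.
move=> d; rewrite [X in eqT _ X]scompD !scomp_Gm -scompD; apply: (eqv_comp HT).
rewrite scompD; apply: (Phi_add HPhi); exact: sfin_comp.
Qed.

Lemma Gm_scale x f : sfin f -> eqT (Gm (sscale x f)) (sscale x (Gm f)).
Proof.
move=> ff; apply: Gm_eqv; first exact: sfinZ.
  by apply: sfinZ; exact: Gm_fin.
move=> d; rewrite [X in eqT _ X]scompZ !scomp_Gm -scompZ; apply: (eqv_comp HT).
rewrite scompZ; apply: (Phi_scale HPhi); exact: sfin_comp.
Qed.

Lemma Gm_graded d f : sfin f -> shomog d f -> eqT (Gm f) (scomp d (Phi f)).
Proof.
move=> ff hf; apply: Gm_eqv => //; first exact: sfin_comp.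
move=> e; case: (e =P d) => [->|/eqP ne].
  rewrite scompK; have -> : scomp d f = f; last exact: (eqv_refl HT).
  by apply: sext => a; rewrite /scomp; case: eqP => // /eqP h; rewrite hf.
rewrite scomp_ne //.
have -> : scomp e f = @szero k s.
  by apply: sext => a; rewrite /scomp; case: eqP => // h; rewrite hf // h.
apply: (eqv_trans HT (eqv_comp HT e (Phi_zero HT HPhi))); rewrite scomp0; exact: (eqv_refl HT).
Qed.

Lemma Gm_one : eqT (Gm (@sone k s)) (@sone k t).
Proof.
apply: Gm_eqv; [exact: sfin_one|exact: sfin_one|] => d.
case: d => [|d].
  have e1 : forall n, scomp 0 (@sone k n) = @sone k n.
    move=> n; apply: sext => a; rewrite /scomp /sone smonE; case: eqP => // h.
    by case: eqP => // ea; case: h; rewrite ea mdeg_m0.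
  rewrite (e1 s); apply: (eqv_comp HT); exact: (Phi_one HPhi).
have e1 : forall n, scomp d.+1 (@sone k n) = @szero k n.
  move=> n; apply: sext => a; rewrite /scomp /sone smonE; case: eqP => // h.
  by case: eqP => // ea; move: h; rewrite ea mdeg_m0.
rewrite (e1 s) (e1 t); apply: (eqv_trans HT (eqv_comp HT d.+1 (Phi_zero HT HPhi))); rewrite scomp0; exact: (eqv_refl HT).
Qed.

Lemma eqv_bigsum n (q : 'I_n -> 'I_n -> k) (I : spoly k n -> Prop) (HI : graded_ideal q I)
  (T : Type) (r : seq T) (F G : T -> spoly k n) :
  (forall x, eqv I (F x) (G x)) ->
  eqv I (fun a => \sum_(x <- r) F x a) (fun a => \sum_(x <- r) G x a).
Proof.
move=> h.
have h' : forall x, predT x -> I ((fun y => ssub (F y) (G y)) x) by move=> x _; exact: h.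
apply: (I_ext (I_bigsum HI r h')) => a.
by rewrite /ssub -sumrB.
Qed.

Lemma Kmul i j u v : sfin u -> sfin v -> ge i u -> ge j v ->
  eqT (scomp (i + j) (Phi (smul ps u v))) (smul pt (scomp i (Phi u)) (scomp j (Phi v))).
Proof.
move=> fu fv gu gv.
have [hu [fhu ghu] eu] := L1 fu gu.
have [hv [fhv ghv] ev] := L1 fv gv.
have fPu := Phi_fin HPhi fu; have fPv := Phi_fin HPhi fv.
have e1 : eqT (Phi (smul ps u v)) (smul pt hu hv).
  apply: (eqv_trans HT (Phi_mul HPhi fu fv)); exact: (eqv_mul HT).
apply: (eqv_trans HT (eqv_comp HT _ e1)); rewrite comp_mul_ge //.
apply: (eqv_mul HT); try exact: sfin_comp.
  by apply: (eqv_comp HT); apply: (eqv_sym HT).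
by apply: (eqv_comp HT); apply: (eqv_sym HT).
Qed.

Lemma Gm_mul f g : sfin f -> sfin g -> eqT (Gm (smul ps f g)) (smul pt (Gm f) (Gm g)).
Proof.
move=> ff fg; apply: Gm_eqv; first exact: sfinM.
  by apply: sfinM; exact: Gm_fin.
move=> d; rewrite comp_mul_dec.
set W := fun i : 'I_d.+1 => smul ps (scomp i f) (scomp (d - i) g).
have fW : forall i, sfin (W i) by move=> i; apply: sfinM; exact: sfin_comp.
have e1 := Phi_lin HT HPhi (index_enum 'I_d.+1) (fun=> 1) fW.
have e2 : (fun c => \sum_(i < d.+1) W i c) = (fun c => \sum_(i <- index_enum 'I_d.+1) 1 * W i c).
  by apply: sext => c; apply: eq_bigr => i _; rewrite mul1r.
rewrite e2; apply: (eqv_trans HT (eqv_comp HT d e1)).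
have e3 : scomp d (fun a => \sum_(x <- index_enum 'I_d.+1) 1 * Phi (W x) a)
        = (fun a => \sum_(x <- index_enum 'I_d.+1) scomp d (Phi (W x)) a).
  apply: sext => a; rewrite /scomp; case: ifP => _; last by rewrite big1.
  by apply: eq_bigr => i _; rewrite mul1r.
rewrite e3.
have e4 : (fun c => \sum_(i < d.+1) smul pt (scomp i (Gm f)) (scomp (d - i) (Gm g)) c)
   = (fun c => \sum_(i <- index_enum 'I_d.+1)
        smul pt (scomp i (Phi (scomp i f))) (scomp (d - i) (Phi (scomp (d - i) g))) c).
  by apply: sext => c; apply: eq_bigr => i _; rewrite !scomp_Gm.
rewrite [X in eqT _ X]comp_mul_dec e4; apply: (eqv_bigsum HT) => i.
have hi : (i + (d - i))%N = d by have := ltn_ord i; lia.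
rewrite /W -{1}hi; apply: Kmul; try exact: sfin_comp; exact: ge_comp.
Qed.

End GrA.

Section GrH.
Variables (k : fieldType) (s t : nat) (ps : 'I_s -> 'I_s -> k) (pt : 'I_t -> 'I_t -> k).
Variables (IS : spoly k s -> Prop) (IT : spoly k t -> Prop).
Variables (Phi : spoly k s -> spoly k t) (Psi : spoly k t -> spoly k s).
Hypotheses (HS : graded_ideal ps IS) (HT : graded_ideal pt IT)
  (HPhi : alg_iso_quot ps pt IS IT Phi) (HPsi : alg_iso_quot pt ps IT IS Psi).
Hypotheses (psnz : forall i j, ps i j != 0) (ptnz : forall i j, pt i j != 0).
Hypotheses (Phi_gen : forall i, Phi (sX k i) m0 = 0) (Psi_gen : forall i, Psi (sX k i) m0 = 0).
Hypothesis PhiPsi : forall h, sfin h -> eqv IT (Phi (Psi h)) h.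

Local Notation eqT := (eqv IT).
Local Notation eqS := (eqv IS).

Lemma GH (h : spoly k t) : sfin h -> eqT (Gm Phi (Gm Psi h)) h.
Proof.
move=> fh; apply: (Gm_eqv HT HPhi) => //; first exact: (Gm_fin HPsi).
move=> d; rewrite scomp_Gm.
set u := scomp d h.
have fu : sfin u by exact: sfin_comp.
have gu : ge d u by exact: ge_comp.
have [w [fw gw] ew] := L1 HS HPsi ptnz Psi_gen fu gu.
have A : eqT (scomp d (Phi (scomp d (Psi u)))) (scomp d (Phi (scomp d w))).
  apply: (eqv_comp HT); apply: (Phi_cong HPhi); try exact: sfin_comp.
  exact: (eqv_comp HS).
apply: (eqv_trans HT A).
set w' := ssub w (scomp d w).
have fw' : sfin w' by apply: sfinB => //; exact: sfin_comp.
have gw' : ge d.+1 w'.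
  move=> a ha; rewrite /w' /ssub /scomp; case: eqP => [_|ne]; first by rewrite subrr.
  by rewrite gw ?subr0 //; lia.
have [z [fz gz] ez] := L1 HT HPhi psnz Phi_gen fw' gw'.
have ew2 : w = sadd (scomp d w) w' by apply: sext => a; rewrite /sadd /w' /ssub; ring.
have B : eqT (Phi w) (sadd (Phi (scomp d w)) z).
  rewrite {1}ew2; apply: (eqv_trans HT (Phi_add HPhi (sfin_comp _ _) fw')).
  apply: (eqv_add HT (eqv_refl HT _) ez).
have C : eqT (Phi w) u.
  apply: (eqv_trans HT _ (PhiPsi fu)); apply: (Phi_cong HPhi) => //.
    exact: (Phi_fin HPsi).
  exact: (eqv_sym HS).
have D : eqT u (sadd (Phi (scomp d w)) z) by apply: (eqv_trans HT (eqv_sym HT C)).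
have E := eqv_comp HT d D.
rewrite scompD in E.
have ez0 : scomp d z = @szero k t.
  by apply: sext => a; rewrite /scomp; case: eqP => // e; rewrite gz // e.
rewrite ez0 in E.
have eu : scomp d u = u by rewrite /u scompK.
rewrite eu in E.
apply: (eqv_sym HT); apply: (eqv_trans HT E); apply: (eqv_eq HT).
by apply: sext => a; rewrite /sadd /szero addr0.
Qed.

End GrH.

Section GrFinal.
Variables (k : fieldType) (s t : nat) (ps : 'I_s -> 'I_s -> k) (pt : 'I_t -> 'I_t -> k).
Variables (IS : spoly k s -> Prop) (IT : spoly k t -> Prop).
Variables (Phi : spoly k s -> spoly k t) (Psi : spoly k t -> spoly k s).
Hypotheses (HS : graded_ideal ps IS) (HT : graded_ideal pt IT)
  (HPhi : alg_iso_quot ps pt IS IT Phi) (HPsi : alg_iso_quot pt ps IT IS Psi).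
Hypotheses (psnz : forall i j, ps i j != 0) (ptnz : forall i j, pt i j != 0).
Hypotheses (Phi_gen : forall i, Phi (sX k i) m0 = 0) (Psi_gen : forall i, Psi (sX k i) m0 = 0).
Hypothesis PhiPsi : forall h, sfin h -> eqv IT (Phi (Psi h)) h.
Hypothesis PsiPhi : forall f, sfin f -> eqv IS (Psi (Phi f)) f.

Lemma gr_iso : [/\ alg_iso_quot ps pt IS IT (Gm Phi), graded_map IT (Gm Phi) &
  forall i, eqv IT (Gm Phi (sX k i)) (scomp 1 (Phi (sX k i)))].
Proof.
split.
- split.
  + by move=> f ff; exact: (Gm_fin HPhi).
  + by move=> f g ff fg h; exact: (Gm_wd HS HT HPhi).
  + by move=> f g ff fg; exact: (Gm_add HT HPhi).
  + by move=> x f ff; exact: (Gm_scale HT HPhi).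
  + by move=> f g ff fg; exact: (Gm_mul HT HPhi psnz Phi_gen).
  + exact: (Gm_one HT HPhi).
  + move=> f g ff fg h.
    have h2 := Gm_wd HT HS HPsi (Gm_fin HPhi ff) (Gm_fin HPhi fg) h.
    have e1 := GH HT HS HPsi HPhi ptnz psnz Psi_gen Phi_gen PsiPhi ff.
    have e2 := GH HT HS HPsi HPhi ptnz psnz Psi_gen Phi_gen PsiPhi fg.
    apply: (eqv_trans HS (eqv_sym HS e1)); apply: (eqv_trans HS h2); exact: e2.
  + move=> h fh; exists (Gm Psi h); first exact: (Gm_fin HPsi).
    exact: (GH HS HT HPhi HPsi psnz ptnz Phi_gen Psi_gen PhiPsi).
- move=> d f ff hf; exists (scomp d (Phi f)); last exact: (Gm_graded HT HPhi).
  split; first exact: sfin_comp.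
  by move=> a ha; rewrite /scomp (negbTE ha).
- move=> i; apply: (Gm_graded HT HPhi); first exact: sfin_mon.
  move=> a ha; rewrite /sX smonE; case: eqP => // e.
  by move: ha; rewrite e mdeg_me.
Qed.

End GrFinal.

Section LinPart.
Variables (k : fieldType) (s t : nat) (ps : 'I_s -> 'I_s -> k) (pt : 'I_t -> 'I_t -> k).
Variables (IS : spoly k s -> Prop) (IT : spoly k t -> Prop) (Phi : spoly k s -> spoly k t).
Hypotheses (HS : graded_ideal ps IS) (HT : graded_ideal pt IT)
  (HPhi : alg_iso_quot ps pt IS IT Phi).
Hypothesis psnz : forall i j, ps i j != 0.
Hypothesis Phi_gen : forall i, Phi (sX k i) m0 = 0.
Hypothesis HT2 : ideal_in_ge 2 IT.

Lemma LinPart (u : spoly k s) (j : 'I_t) : sfin u -> u m0 = 0 ->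
  Phi u (me j) = \sum_(a < s) u (me a) * Phi (sX k a) (me j).
Proof.
move=> fu u0.
pose lin := fun x => \sum_(a <- index_enum 'I_s) u (me a) * sX k a x.
have flin : sfin lin.
  exists 1%N => x hx; rewrite /lin big1 // => a _; rewrite /sX smonE; case: eqP => [e|]; last by rewrite mulr0.
  by move: hx; rewrite e mdeg_me.
pose u2 := ssub u lin.
have fu2 : sfin u2 by exact: sfinB.
have gu2 : ge 2 u2.
  move=> x hx; rewrite /u2 /ssub /lin.
  case E: (mdeg x) hx => [|[|d]] // _.
    rewrite (mdeg0 E) u0 big1 ?subrr // => a _; rewrite /sX smonE.
    by case: eqP => [e|]; [have := me_neq0 a; rewrite /me -e eqxx|rewrite mulr0].
  case: (mdeg1 E) => l ->.
  rewrite (@sum_single _ _ _ _ l) /= ?/sX ?smonE ?eqxx ?mulr1 ?subrr //.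
  move=> a _ ne; rewrite smonE; case: (me l =P me a) => [e|]; last by rewrite mulr0.
  by move: ne; rewrite (me_inj e) eqxx.
have eu : u = sadd lin u2 by apply: sext => x; rewrite /sadd /u2 /ssub; ring.
have [z [fz gz] ez] := L1 HT HPhi psnz Phi_gen fu2 gu2.
have e1 : eqv IT (Phi u) (sadd (fun x => \sum_(a <- index_enum 'I_s) u (me a) * Phi (sX k a) x) z).
  rewrite {1}eu; apply: (eqv_trans HT (Phi_add HPhi flin fu2)).
  apply: (eqv_add HT _ ez).
  by apply: (Phi_lin HT HPhi) => a; exact: sfin_mon.
rewrite (eqv_low HT2 e1) ?mdeg_me // /sadd gz ?mdeg_me // addr0.
by [].
Qed.

End LinPart.

Section Inv.
Variables (k : fieldType) (s t : nat) (ps : 'I_s -> 'I_s -> k) (pt : 'I_t -> 'I_t -> k).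
Variables (IS : spoly k s -> Prop) (IT : spoly k t -> Prop).
Variables (F : spoly k s -> spoly k t) (Fi : spoly k t -> spoly k s).
Hypotheses (HS : graded_ideal ps IS) (HT : graded_ideal pt IT)
  (HF : alg_iso_quot ps pt IS IT F).
Hypothesis Fi_spec : forall h, sfin h -> sfin (Fi h) /\ eqv IT (F (Fi h)) h.

Lemma Fi_fin h : sfin h -> sfin (Fi h). Proof. by case/Fi_spec. Qed.
Lemma FFi h : sfin h -> eqv IT (F (Fi h)) h. Proof. by case/Fi_spec. Qed.

Lemma inj_eqv f g : sfin f -> sfin g -> eqv IT (F f) (F g) -> eqv IS f g.
Proof. exact: (ai_inj HF). Qed.

Lemma FiF f : sfin f -> eqv IS (Fi (F f)) f.
Proof.
move=> ff; have fF := ai_fin HF ff.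
apply: inj_eqv => //; first exact: Fi_fin.
exact: FFi.
Qed.

Lemma Fi_iso : alg_iso_quot pt ps IT IS Fi.
Proof.
have fi := Fi_fin; have ffi := FFi.
have fF := ai_fin HF.
split.
- exact: Fi_fin.
- move=> f g ff fg h; apply: inj_eqv; try exact: fi.
  apply: (eqv_trans HT (ffi _ ff)); apply: (eqv_trans HT h); apply: (eqv_sym HT); exact: ffi.
- move=> f g ff fg; apply: inj_eqv; [apply: fi; exact: sfinD|apply: sfinD; exact: fi|].
  apply: (eqv_trans HT (ffi _ (sfinD ff fg))).
  apply: (eqv_sym HT); apply: (eqv_trans HT (ai_add HF (fi _ ff) (fi _ fg))).
  exact: (eqv_add HT (ffi _ ff) (ffi _ fg)).
- move=> x f ff; apply: inj_eqv; [apply: fi; exact: sfinZ|apply: sfinZ; exact: fi|].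
  apply: (eqv_trans HT (ffi _ (sfinZ x ff))).
  apply: (eqv_sym HT); apply: (eqv_trans HT (ai_scale HF x (fi _ ff))).
  exact: (eqv_scale HT x (ffi _ ff)).
- move=> f g ff fg; apply: inj_eqv; [apply: fi; exact: sfinM|apply: sfinM; exact: fi|].
  apply: (eqv_trans HT (ffi _ (sfinM pt ff fg))).
  apply: (eqv_sym HT); apply: (eqv_trans HT (ai_mul HF (fi _ ff) (fi _ fg))).
  apply: (eqv_mul HT) => //; try (apply: fF; exact: fi); exact: ffi.
- apply: inj_eqv; [apply: fi; exact: sfin_one|exact: sfin_one|].
  apply: (eqv_trans HT (ffi _ (sfin_one k t))).
  apply: (eqv_sym HT); exact: (ai_one HF).
- move=> f g ff fg h.
  apply: (eqv_trans HT (eqv_sym HT (ffi _ ff))); apply: (eqv_trans HT _ (ffi _ fg)).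
  by apply: (ai_wd HF) => //; exact: fi.
- move=> f ff; exists (F f); first exact: fF.
  exact: FiF.
Qed.

End Inv.

Section Skew.
Variables (k : fieldType) (n : nat) (p : 'I_n -> 'I_n -> k).
Hypothesis Hp : skew_params p.

Lemma p_nz i j : p i j != 0. Proof. by case: Hp. Qed.
Lemma p_diag i : p i i = 1. Proof. by case: Hp. Qed.
Lemma p_inv i j : p j i = (p i j)^-1. Proof. by case: Hp. Qed.

Lemma twist_swap (i j : 'I_n) : twist p (me j) (me i) = p i j * twist p (me i) (me j).
Proof.
rewrite !twist_me; case: (ltngtP i j) => h.
- by rewrite mulr1.
- by rewrite p_inv mulVf ?p_nz.
- by rewrite (val_inj h) p_diag mulr1.
Qed.

Lemma twist_ne (i j : 'I_n) : i != j -> p i j != 1 -> p j i != 1 ->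
  twist p (me i) (me j) != twist p (me j) (me i).
Proof.
move=> ne h1 h2; rewrite !twist_me; case: (ltngtP i j) => h //.
- by rewrite eq_sym.
- by move: ne; rewrite (val_inj h) eqxx.
Qed.

Lemma XX_rel (i j : 'I_n) :
  smul p (sX k j) (sX k i) = sscale (p i j) (smul p (sX k i) (sX k j)).
Proof.
rewrite /sX -/(me j) -/(me i) !smul_mon_mon maddC twist_swap.
by apply: sext => x; rewrite /sscale mulrA.
Qed.
End Skew.

Section OneVar.
Variables (k : fieldType) (ps : 'I_1 -> 'I_1 -> k) (t : nat) (pt : 'I_t -> 'I_t -> k).
Variables (IS : spoly k 1%N -> Prop) (IT : spoly k t -> Prop) (Phi : spoly k 1%N -> spoly k t).
Hypotheses (HS : graded_ideal ps IS) (HT : graded_ideal pt IT)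
  (HPhi : alg_iso_quot ps pt IS IT Phi) (HT2 : ideal_in_ge 2 IT).
Hypothesis psnz : forall i j, ps i j != 0.
Hypothesis mu_nz : psi Phi (sX k ord0) != 0.

Lemma onevar_zero f : IS f -> f = @szero k 1%N.
Proof.
move=> hf.
have monnz : forall d a, mdeg a = d -> psi Phi (smon k a) != 0.
  elim=> [|d IH] a ha.
    by rewrite (mdeg0 ha) -/(@sone k 1%N) (psi_one HPhi HT2) oner_eq0.
  have [|i [b [ea hb]]] := smon_pred (a := a); first by rewrite ha.
  rewrite ea (smon_succ psnz) (psi_scale HPhi HT2); last by apply: sfinM; exact: sfin_mon.
  rewrite (psi_mul HPhi HT2); try exact: sfin_mon.
  apply: mulf_neq0; first by rewrite invr_eq0 twist_neq0.
  apply: mulf_neq0; first by apply: IH; rewrite hb ha.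
  by rewrite (ord1 i).
apply: sext => a; rewrite /szero.
have h1 := gi_graded HS (mdeg a) hf.
have e : scomp (mdeg a) f = sscale (f a) (smon k a).
  apply: sext => b; rewrite /scomp /sscale smonE; case: eqP => hb.
    have -> : b = a; last by rewrite eqxx mulr1.
    by apply/ffunP => i; rewrite (ord1 i); move: hb; rewrite /mdeg !big_ord1.
  by case: eqP => [ba|]; [case: hb; rewrite ba|rewrite mulr0].
have := psi_IS HS HT HPhi HT2 h1; rewrite e (psi_scale HPhi HT2); last exact: sfin_mon.
by move/eqP; rewrite mulf_eq0 (negbTE (monnz _ a erefl)) orbF => /eqP.
Qed.
End OneVar.

Section Matrix.
Variables (k : fieldType) (n m : nat) (L : 'I_n -> 'I_m -> k) (L' : 'I_m -> 'I_n -> k).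
Variables (q : 'I_n -> 'I_n -> k) (r : 'I_m -> 'I_m -> k).
Hypothesis qne : forall i j, i != j -> q i j != q j i.
Hypothesis I1 : forall i j, \sum_a L i a * L' a j = if i == j then 1 else 0.
Hypothesis I2 : forall a b, \sum_i L' a i * L i b = if a == b then 1 else 0.
Hypothesis R1 : forall a b i j, i != j ->
  q i j * L' b i * L' a j + q j i * L' b j * L' a i
  = r a b * (q i j * L' a i * L' b j + q j i * L' a j * L' b i).
Hypothesis R2 : forall a b i, L' b i * L' a i = r a b * (L' a i * L' b i).

Lemma row_exists a : exists i, L' a i != 0.
Proof.
case: (boolP [exists i, L' a i != 0]) => [/existsP //|/existsPn h].
have := I2 a a; rewrite eqxx big1 => [/eqP|i _]; first by rewrite eq_sym oner_eq0.
by have := h i; rewrite negbK => /eqP ->; rewrite mul0r.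
Qed.

Lemma row_unique a i j : L' a i != 0 -> L' a j != 0 -> i = j.
Proof.
move=> hi hj; apply/eqP; apply/negPn/negP => ne.
have claim : forall b, L' b i * L' a j = L' b j * L' a i.
  move=> b; case: (r a b =P 1) => hr.
    have := R1 a b ne; rewrite hr mul1r => h.
    apply/eqP; rewrite -subr_eq0; apply/eqP.
    have hq : q i j - q j i != 0 by rewrite subr_eq0; exact: qne.
    apply: (mulfI hq); rewrite mulr0.
    have -> : (q i j - q j i) * (L' b i * L' a j - L' b j * L' a i) =
      (q i j * L' b i * L' a j + q j i * L' b j * L' a i) -
      (q i j * L' a i * L' b j + q j i * L' a j * L' b i) by ring.
    by rewrite h subrr.
  have z : forall l, L' a l != 0 -> L' b l = 0.
    move=> l hl; have := R2 a b l => h.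
    have : (1 - r a b) * (L' a l * L' b l) = 0 by rewrite mulrBl mul1r -h mulrC subrr.
    move/eqP; rewrite mulf_eq0 subr_eq0 eq_sym (negbTE (introN eqP hr)) /=.
    by rewrite mulf_eq0 (negbTE hl) /= => /eqP.
  by rewrite (z i hi) (z j hj) !mul0r.
have e : \sum_b L i b * (L' b i * L' a j - L' b j * L' a i) =
   (\sum_b L i b * L' b i) * L' a j - (\sum_b L i b * L' b j) * L' a i.
  rewrite !mulr_suml -sumrB; apply: eq_bigr => b _; ring.
move: e; rewrite !I1 eqxx (negbTE ne) mul1r mul0r subr0 big1 => [e|b _].
  by move: hj; rewrite -e eqxx.
by rewrite claim subrr mulr0.
Qed.

End Matrix.

End Helpers.
Import Helpers.


Theorem theorem0p4 (k : fieldType) (n m : nat)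
  (p : 'I_n -> 'I_n -> k) (p' : 'I_m -> 'I_m -> k)
  (M : spoly k n -> Prop) (N : spoly k m -> Prop) :
  (0 < n)%N -> (0 < m)%N ->
  skew_params p -> skew_params p' ->
  (forall i j : 'I_n, i != j -> p i j != 1) ->
  graded_ideal p M -> ideal_in_ge 3 M ->
  graded_ideal p' N -> ideal_in_ge 2 N ->
  (exists F : spoly k n -> spoly k m, alg_iso_quot p p' M N F) ->
  n = m /\
  exists sigma : 'I_m -> 'I_n,
    [/\ bijective sigma,
        (forall i j, p' i j = p (sigma i) (sigma j)) &
        exists c : 'I_m -> k,
          (forall i, c i != 0) /\
          exists G : spoly k m -> spoly k n,
            [/\ alg_iso_quot p' p N M G,
                graded_map M G &
                forall i, M (ssub (G (@sX k m i)) (sscale (c i) (@sX k n (sigma i))))]].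
Proof.
move=> hn hm Hp Hp' pne HM HM3 HN HN2 [F HF].
have HM2 : ideal_in_ge 2 M.
  by move=> f h a ha; apply: (HM3 f h); apply: ltn_trans ha _.
have pnz := p_nz Hp; have p'nz := p_nz Hp'.
pose F' (h : spoly k m) := epsilon (inhabits (@szero k n))
   (fun f : spoly k n => sfin f /\ N (ssub (F f) h)).
have F'spec : forall h, sfin h -> sfin (F' h) /\ eqv N (F (F' h)) h.
  move=> h fh; apply: (epsilon_spec (inhabits (@szero k n))
    (fun f : spoly k n => sfin f /\ N (ssub (F f) h))).
  by have [f ff e] := ai_surj HF fh; exists f.
have HF' : alg_iso_quot p' p N M F' := Fi_iso HN HF F'spec.
have FF' : forall h, sfin h -> eqv N (F (F' h)) h := fun h fh => FFi F'spec fh.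
have F'F : forall f, sfin f -> eqv M (F' (F f)) f := fun f ff => FiF HF F'spec ff.
have F'fin : forall h, sfin h -> sfin (F' h) := fun h fh => (F'spec h fh).1.
have Ffin : forall f, sfin f -> sfin (F f) := ai_fin HF.
have not_a : ~ (m = 1%N /\ (1 < n)%N).
  case=> hm1 hn2.
  have i0 : 'I_m := Ordinal hm.
  have b1 : 'I_n := Ordinal hn.
  have b2 : 'I_n := Ordinal hn2.
  have ne : (Ordinal hn : 'I_n) != Ordinal hn2 by [].
  apply: (tangent HF' HM2 Ffin F'F (i0 := Ordinal hm) ne (p_diag Hp') p'nz).
  move=> b j /eqP []; apply: val_inj => /=; have := ltn_ord j; move: (nat_of_ord j) => x hx; lia.
have not_b : forall i0 : 'I_n, psi F (sX k i0) != 0 -> ~ (1 < m)%N.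
  move=> i0 hi0 hm2.
  have ne : (Ordinal hm : 'I_m) != Ordinal hm2 by [].
  apply: (tangent HF HN2 F'fin FF' (i0 := i0) ne (p_diag Hp) pnz).
  move=> b j nj.
  have fXj : sfin (sX k j) := sfin_mon _ _.
  have fXi : sfin (sX k i0) := sfin_mon _ _.
  have hrel := XX_rel Hp i0 j.
  have pij : p i0 j != 1 by apply: pne; rewrite eq_sym.
  have muj : psi F (sX k j) = 0.
    have := psi_mul HF HN2 fXj fXi; rewrite hrel (psi_scale HF HN2); last exact: sfinM.
    rewrite (psi_mul HF HN2) // => h.
    have : (1 - p i0 j) * (psi F (sX k i0) * psi F (sX k j)) = 0.
      by rewrite mulrBl mul1r h mulrC subrr.
    move/eqP; rewrite mulf_eq0 subr_eq0 eq_sym (negbTE pij) mulf_eq0 (negbTE hi0) /=.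
    by move/eqP.
  have := D_mul HF HN2 b fXj fXi; rewrite hrel (D_scale HF HN2); last exact: sfinM.
  rewrite (D_mul HF HN2) // muj mul0r addr0 mulr0 add0r => h.
  have : (1 - p i0 j) * (psi F (sX k i0) * Dd F b (sX k j)) = 0.
    by rewrite mulrBl mul1r h [Dd F b _ * _]mulrC subrr.
  move/eqP; rewrite mulf_eq0 subr_eq0 eq_sym (negbTE pij) mulf_eq0 (negbTE hi0) /=.
  by move/eqP.
have mu_or : (forall i, psi F (sX k i) = 0) \/
   (m = 1%N /\ n = 1%N /\ exists i, psi F (sX k i) != 0).
  case: (boolP [exists i, psi F (sX k i) != 0]) => [/existsP [i0 hi0]|/existsPn h].
    right; have hm1 : m = 1%N by have := not_b i0 hi0; lia.
    split => //; split; last by exists i0.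
    by have := not_a; rewrite hm1; lia.
  by left => i; have := h i; rewrite negbK => /eqP.
case: mu_or => [Hmu|[hm1 [hn1 [i0 hi0]]]]; last first.
  subst m n.
  have hi0' : psi F (sX k ord0) != 0 by move: hi0; rewrite (ord1 i0).
  have Mz : forall f, M f -> f = @szero k 1%N := fun f hf =>
    onevar_zero HM HN HF HN2 pnz hi0' hf.
  have lam : psi F' (sX k ord0) != 0.
    apply/negP => /eqP h0.
    have ch : forall f, sfin f -> psi F' f = f m0.
      apply: (char0 p'nz).
      - exact: (psi_add HF' HM2).
      - exact: (psi_scale HF' HM2).
      - exact: (psi_mul HF' HM2).
      - exact: (psi_one HF' HM2).
      - by move=> i; rewrite (ord1 i).
    have fX : sfin (sX k (@ord0 0)) := sfin_mon _ _.
    have := ch _ (Ffin _ fX); rewrite /psi (low0 HM2 (F'F _ fX)) /sX smonE.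
    have -> : (m0 == [ffun j => nat_of_bool (j == ord0)] :> mon 1) = false.
      by apply/eqP => /ffunP /(_ ord0); rewrite !ffunE eqxx.
    by move=> e; move: hi0'; rewrite /psi -e eqxx.
  have Nz : forall f, N f -> f = @szero k 1%N := fun f hf =>
    onevar_zero HN HM HF' HM2 p'nz lam hf.
  have sxx : forall x : spoly k 1%N, ssub x x = @szero k 1%N.
    by move=> x; apply: sext => a; rewrite /ssub subrr.
  have M0 : M (@szero k 1%N) := gi_zero HM.
  have N0 : N (@szero k 1%N) := gi_zero HN.
  have epp : p' = p.
    by apply: functional_extensionality => i; apply: functional_extensionality => j;
      rewrite (ord1 i) (ord1 j) (p_diag Hp) (p_diag Hp').
  subst p'.
  split => //; exists id; split.
  - by exists id.
  - by [].
  exists (fun=> 1); split; first by move=> i; exact: oner_neq0.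
  exists id; split.
  - split => //.
    + by move=> f g _ _ /Nz ->.
    + by move=> f g _ _; rewrite sxx.
    + by move=> x f _; rewrite sxx.
    + by move=> f g _ _; rewrite sxx.
    + by rewrite sxx.
    + by move=> f g _ _ /Mz ->.
    + by move=> h fh; exists h => //; rewrite sxx.
  - by move=> d f ff hf; exists f => //; rewrite sxx.
  - move=> i; have -> : sscale 1 (sX k (id i)) = sX k i.
      by apply: sext => a; rewrite /sscale mul1r.
    by rewrite sxx.
(* main case: the augmentation is preserved *)
have chF : forall f, sfin f -> psi F f = f m0.
  apply: (char0 pnz).
  - exact: (psi_add HF HN2).
  - exact: (psi_scale HF HN2).
  - exact: (psi_mul HF HN2).
  - exact: (psi_one HF HN2).
  - exact: Hmu.
have lam0 : forall a, F' (sX k a) m0 = 0.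
  move=> a; have fX : sfin (sX k a) := sfin_mon _ _.
  rewrite -chF; last exact: F'fin.
  rewrite /psi (low0 HN2 (FF' _ fX)) /sX smonE.
  case: eqP => // e; have := me_neq0 a; by rewrite /me -e eqxx.
have [HG HGg HGX] := gr_iso HN HM HF' HF p'nz pnz lam0 Hmu F'F FF'.
pose L (i : 'I_n) (a : 'I_m) := F (sX k i) (me a).
pose L' (a : 'I_m) (i : 'I_n) := F' (sX k a) (me i).
have sXme : forall N0 (i j : 'I_N0), sX k i (me j) = if i == j then 1 else 0.
  move=> N0 i j; rewrite /sX smonE -/(me i).
  by case: (i =P j) => [->|ne]; [rewrite eqxx|case: eqP => // /me_inj e; case: ne].
have I1 : forall i j, \sum_a L i a * L' a j = if i == j then 1 else 0.
  move=> i j; have fX : sfin (sX k i) := sfin_mon _ _.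
  rewrite /L /L' -(LinPart HM HF' p'nz lam0 HM2 j (Ffin _ fX) (Hmu i)).
  by rewrite (low1 HM2 j (F'F _ fX)) sXme.
have I2 : forall a b, \sum_i L' a i * L i b = if a == b then 1 else 0.
  move=> a b; have fX : sfin (sX k a) := sfin_mon _ _.
  rewrite /L /L' -(LinPart HN HF pnz Hmu HN2 b (F'fin _ fX) (lam0 a)).
  by rewrite (low1 HN2 b (FF' _ fX)) sXme.
have ge1 : forall a, ge 1 (F' (sX k a)).
  by move=> a x; rewrite ltnS leqn0 => /eqP /mdeg0 ->; exact: lam0.
have rel : forall a b, eqv M (smul p (F' (sX k b)) (F' (sX k a)))
                          (sscale (p' a b) (smul p (F' (sX k a)) (F' (sX k b)))).
  move=> a b.
  have fa : sfin (sX k a) := sfin_mon _ _.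
  have fb : sfin (sX k b) := sfin_mon _ _.
  apply: (eqv_trans HM (eqv_sym HM (ai_mul HF' fb fa))).
  rewrite (XX_rel Hp' a b).
  apply: (eqv_trans HM (ai_scale HF' _ (sfinM _ fa fb))).
  exact: (eqv_scale HM _ (ai_mul HF' fa fb)).
have R1 : forall a b i j, i != j ->
  twist p (me i) (me j) * L' b i * L' a j + twist p (me j) (me i) * L' b j * L' a i
  = p' a b * (twist p (me i) (me j) * L' a i * L' b j + twist p (me j) (me i) * L' a j * L' b i).
  move=> a b i j ne; have := eqv_low HM3 (rel a b) (a := madd (me i) (me j)).
  rewrite mdeg_add !mdeg_me /sscale !smul_at2 //; exact.
have R2 : forall a b i, L' b i * L' a i = p' a b * (L' a i * L' b i).
  move=> a b i; have := eqv_low HM3 (rel a b) (a := madd (me i) (me i)).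
  rewrite mdeg_add !mdeg_me /sscale !smul_at2' //; exact.
have qne : forall i j : 'I_n, i != j -> twist p (me i) (me j) != twist p (me j) (me i).
  move=> i j ne; apply: twist_ne => //; first exact: pne.
  by apply: pne; rewrite eq_sym.
pose sig a := xchoose (row_exists I2 a).
have sigP : forall a, L' a (sig a) != 0 := fun a => xchooseP (row_exists I2 a).
have uniq : forall a i, L' a i != 0 -> i = sig a.
  by move=> a i h; apply: (row_unique qne I1 R1 R2 h (sigP a)).
have ones : forall a j, j != sig a -> L' a j = 0.
  move=> a j ne; apply/eqP; apply/negPn/negP => h.
  by move: ne; rewrite (uniq a j h) eqxx.
have sum1 : forall a b, \sum_i L' a i * L i b = L' a (sig a) * L (sig a) b.
  move=> a b; rewrite (@sum_single _ _ _ _ (sig a)) //.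
  by move=> i _ ne; rewrite ones ?mul0r.
have sig_inj : injective sig.
  move=> a b e; apply/eqP; apply/negPn/negP => ne.
  move: (I2 a b); rewrite sum1 (negbTE ne) => /eqP.
  rewrite mulf_eq0 (negbTE (sigP a)) /= e => /eqP h2.
  have := I2 b b; rewrite sum1 h2 mulr0 eqxx => /eqP.
  by rewrite eq_sym oner_eq0.
have sig_surj : forall i, exists a, sig a = i.
  move=> i; case: (boolP [exists a, L' a i != 0]) => [/existsP [a ha]|/existsPn h].
    by exists a; rewrite -(uniq a i ha).
  have := I1 i i; rewrite eqxx big1 => [/eqP|a _]; first by rewrite eq_sym oner_eq0.
  by have := h a; rewrite negbK => /eqP ->; rewrite mulr0.
have sig_surj' : forall i, exists a, sig a == i.
  by move=> i; have [a ha] := sig_surj i; exists a; apply/eqP.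
pose tau i := xchoose (sig_surj' i).
have tauK : cancel tau sig := fun i => eqP (xchooseP (sig_surj' i)).
have sigK : cancel sig tau := fun a => sig_inj _ _ (tauK (sig a)).
have enm : n = m.
  apply/eqP; rewrite eqn_leq.
  have h1 := leq_card _ (can_inj tauK); have h2 := leq_card _ sig_inj.
  by rewrite !card_ord in h1 h2; rewrite h1 h2.
split => //; exists sig; split.
- by exists tau.
- move=> a b; case: (a =P b) => [->|/eqP ne]; first by rewrite !p_diag.
  have nij : sig a != sig b by apply: contra ne => /eqP /sig_inj ->.
  have := R1 a b (sig a) (sig b) nij.
  have z1 : L' b (sig a) = 0 by apply: ones.
  have z2 : L' a (sig b) = 0 by apply: ones; rewrite eq_sym.
  rewrite z1 z2.
  rewrite !mulr0 add0r addr0 (twist_swap Hp).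
  have tw := twist_neq0 pnz (me (sig a)) (me (sig b)).
  move=> h.
  have : (p (sig a) (sig b) - p' a b) *
     (twist p (me (sig a)) (me (sig b)) * L' a (sig a) * L' b (sig b)) = 0.
    by rewrite mulrBl -h; ring.
  move/eqP; rewrite !mulf_eq0 (negbTE tw) (negbTE (sigP a)) (negbTE (sigP b)) /=.
  by rewrite orbF subr_eq0 => /eqP ->.
exists (fun a => L' a (sig a)); split; first exact: sigP.
exists (Gm F'); split => // a.
apply: (eqv_trans HM (HGX a)); apply: (eqv_eq HM); apply: sext => x.
rewrite /scomp /sscale /sX smonE.
case: eqP => hx.
  have [l el] := mdeg1 hx; rewrite el.
  case: (l =P sig a) => [->|ne]; first by rewrite eqxx mulr1.
  rewrite -/(L' a l) ones; last exact/eqP.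
  by case: eqP => [/me_inj e|]; [case: ne|rewrite mulr0].
by case: eqP => [e|]; [case: hx; rewrite e mdeg_me|rewrite mulr0].
Qed.
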